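(* Let $g$ be an $n$-person no-sink WTT game form satisfying the standing assumptions below, and let $1\le k\le n$. Then $g$ contains no $k$-box.
   Context: Let $X_1,\dots,X_n$ and $A$ be finite nonempty sets. An $n$-person game form is a map $g: X_1\times\cdots\times X_n\to A$; elements of $X=X_1\times\cdots\times X_n$ are strategy profiles. For a direction $i\in[n]$ write $X_{-i}=\prod_{t\neq i}X_t$, and for $s\in X_i$, $y\in X_{-i}$ write $(s,y)$ for the profile with $i$-th coordinate $s$ and other coordinates $y$. The hyperplane perpendicular to direction $i$ at $s\in X_i$ is $H_s=\{x\in X: x_i=s\}$; for a profile $x$ write $H_i^x$ for the hyperplane perpendicular to direction $i$ containing $x$. $g$ is weakly totally tight (WTT) if for every $i\in[n]$, all $s\neq s'$ in $X_i$ and all $y\neq y'$ in $X_{-i}$, at least one of $g(s,y)=g(s,y')$, $g(s,y)=g(s',y)$, $g(s',y')=g(s',y)$, $g(s',y')=g(s,y')$ holds. A set $S\subseteq X$ is a constant region if there is $c\in A$ with $g(x)=c$ for all $x\in S$. For distinct $j,k\in X_i$, $H_j^{\neq}(k)=\{(j,y): y\in X_{-i},\ g(j,y)\neq g(k,y)\}$. We write $H_j\stackrel{c}{\longrightarrow}H_k$ if $g(x)=c$ for all $x\in H_j^{\neq}(k)$, and $H_j\stackrel{c}{\Longrightarrow}H_k$ if $H_j\stackrel{c}{\longrightarrow}H_k$ and there is no outcome $d$ with $H_k\stackrel{d}{\longrightarrow}H_j$. If there exist $k\in X_i\setminus\{j\}$ and $c$ with $H_j\stackrel{c}{\Longrightarrow}H_k$,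 $c$ is called the proper outcome of $H_j$ (for WTT $g$ it does not depend on $k$). We say an outcome $a$ is not the proper outcome of a hyperplane $H$ if $H$ has no proper outcome or its proper outcome differs from $a$. $H_j$ is a sink hyperplane if for every $k\in X_i\setminus\{j\}$ there is an outcome $c_k$ with $H_k\stackrel{c_k}{\longrightarrow}H_j$; $g$ is no-sink if there is no sink hyperplane in any direction. A WTT no-sink $g$ contains a $k$-box if there are profiles $x,y$ such that: $g(x)\neq g(y)$; $x$ and $y$ differ in exactly $k$ coordinates $i_1,\dots,i_k$; and for every $1\le t\le k$, $g(x)$ is not the proper outcome of $H_{i_t}^x$ and $g(y)$ is not the proper outcome of $H_{i_t}^y$. Standing assumptions: no hyperplane of $g$ is a constant region, and for every $i$ and distinct $j,k\in X_i$ there is $y\in X_{-i}$ with $g(j,y)\neq g(k,y)$. *)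

(* Defs.v *)
From HB Require Import structures.
From mathcomp Require Import all_boot.
Unset Printing Implicit Defensive.

Section GameForms.
Variables (n : nat) (X : 'I_n -> finType) (A : finType).

Definition profile := {dffun forall i : 'I_n, X i}.

(* (s, y): the profile y with its i-th coordinate replaced by s;
   y is a full profile whose i-th coordinate is ignored (it represents
   the element of X_{-i} obtained by forgetting coordinate i). *)
Definition upd (y : profile) (i : 'I_n) (s : X i) : profile :=
  [ffun j => @dfwith _ X (fun j => y j) i s j].

(* y and y' represent different elements of X_{-i} *)
Definition differ_off (i : 'I_n) (y y' : profile) : Prop :=
  exists j : 'I_n, j != i /\ y j != y' j.

Variable g : profile -> A.

Definition WTT : Prop :=
  forall (i : 'I_n) (s s' : X i) (y y' : profile),
    s != s' -> differ_off i y y' ->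
    g (upd y i s) = g (upd y' i s) \/ g (upd y i s) = g (upd y i s') \/
    g (upd y' i s') = g (upd y i s') \/ g (upd y' i s') = g (upd y' i s).

(* H_j --c--> H_k (direction i): every x in H_j^{<>}(k) has g x = c *)
Definition arrow (i : 'I_n) (j k : X i) (c : A) : Prop :=
  forall y : profile, g (upd y i j) != g (upd y i k) -> g (upd y i j) = c.

Definition darrow (i : 'I_n) (j k : X i) (c : A) : Prop :=
  arrow i j k c /\ ~ (exists d : A, arrow i k j d).

Definition proper_outcome (i : 'I_n) (j : X i) (c : A) : Prop :=
  exists k : X i, k != j /\ darrow i j k c.

Definition sink (i : 'I_n) (j : X i) : Prop :=
  forall k : X i, k != j -> exists c : A, arrow i k j c.

Definition no_sink : Prop := forall (i : 'I_n) (j : X i), ~ sink i j.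

Definition no_constant_hyperplane : Prop :=
  forall (i : 'I_n) (s : X i), ~ (exists c : A, forall y : profile, g (upd y i s) = c).

Definition distinct_hyperplanes_differ : Prop :=
  forall (i : 'I_n) (j k : X i), j != k ->
    exists y : profile, g (upd y i j) != g (upd y i k).

Definition contains_box (k : nat) : Prop :=
  exists x y : profile,
    g x != g y /\
    #|[set i : 'I_n | x i != y i]| = k /\
    (forall i : 'I_n, x i != y i ->
       ~ proper_outcome i (x i) (g x) /\ ~ proper_outcome i (y i) (g y)).

End GameForms.

Arguments upd {n X} y i s.
Arguments differ_off {n X} i y y'.
Arguments WTT {n X A} g.
Arguments arrow {n X A} g i j k c.
Arguments darrow {n X A} g i j k c.
Arguments proper_outcome {n X A} g i j c.
Arguments sink {n X A} g i j.
Arguments no_sink {n X A} g.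
Arguments no_constant_hyperplane {n X A} g.
Arguments distinct_hyperplanes_differ {n X A} g.
Arguments contains_box {n X A} g k.

(* Main.v *)
Require Import Defs.
From HB Require Import structures.
From mathcomp Require Import all_boot.
From Stdlib Require Import Classical.

Section H.
Variables (n : nat) (X : 'I_n -> finType) (A : finType).
Variable g : profile n X -> A.

Lemma upd_in (y : profile n X) i s : upd y i s i = s.
Proof. by rewrite /upd ffunE dfwith_in. Qed.

Lemma upd_out (y : profile n X) i s j : i != j -> upd y i s j = y j.
Proof. by move=> ij; rewrite /upd ffunE dfwith_out. Qed.

Lemma upd_self (y : profile n X) i : upd y i (y i) = y.
Proof.
apply/ffunP => j; case: (eqVneq i j) => [<-|ij]; first by rewrite upd_in.
by rewrite upd_out.
Qed.

Lemma upd_upd (y : profile n X) i s s' : upd (upd y i s) i s' = upd y i s'.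
Proof.
apply/ffunP => j; case: (eqVneq i j) => [<-|ij]; first by rewrite !upd_in.
by rewrite !upd_out.
Qed.

Lemma upd_eq i (y y' : profile n X) s : ~ differ_off i y y' -> upd y i s = upd y' i s.
Proof.
move=> Hd; apply/ffunP => j; case: (eqVneq i j) => [<-|ij]; first by rewrite !upd_in.
rewrite !upd_out //; apply/eqP/negP => H; apply: Hd; exists j; idtac.
split; [by rewrite eq_sym | exact/negP].
Qed.

Hypothesis Hwtt : WTT g.
Hypothesis Hns : no_sink g.
Hypothesis Hdiff : distinct_hyperplanes_differ g.

Lemma wtt_col t (j l : X t) (u v : profile n X) : j != l ->
  g (upd u t j) = g (upd v t j) \/ g (upd u t j) = g (upd u t l) \/
  g (upd v t l) = g (upd u t l) \/ g (upd v t l) = g (upd v t j).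
Proof.
move=> jl; case: (classic (differ_off t u v)) => Hd; first exact: Hwtt.
by left; congr g; apply: upd_eq.
Qed.

Lemma not_arrow_two t (m j : X t) : m != j -> ~ (exists d, arrow g t m j d) ->
  exists y1 y2, g (upd y1 t m) <> g (upd y1 t j) /\ g (upd y2 t m) <> g (upd y2 t j)
     /\ g (upd y1 t m) <> g (upd y2 t m).
Proof.
move=> mj Hna; have [y1 /eqP H1] := Hdiff t m j mj.
apply: NNPP => Hc; apply: Hna; exists (g (upd y1 t m)) => z /eqP Hz.
apply: NNPP => Hz2; apply: Hc; exists y1, z; split=> //; split=> //.
by move=> E; apply: Hz2; rewrite E.
Qed.

Lemma dich t (j l : X t) : j != l ->
  (exists c, arrow g t j l c) \/ (exists d, arrow g t l j d).
Proof.
move=> jl; apply: NNPP => Hc.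
have Hnj : ~ (exists c, arrow g t j l c) by move=> H; apply: Hc; left.
have Hnl : ~ (exists c, arrow g t l j c) by move=> H; apply: Hc; right.
have P : forall u v, g (upd u t j) <> g (upd u t l) -> g (upd v t j) <> g (upd v t l) ->
   g (upd u t j) = g (upd v t j) \/ g (upd u t l) = g (upd v t l).
  move=> u v Hu Hv; case: (@wtt_col t j l u v jl) => [E|[E|[E|E]]].
  - by left.
  - by [].
  - by right.
  - by case: Hv; rewrite E.
have [z0 [z1 [H0 [H1 H01]]]] := @not_arrow_two t j l jl Hnj.
have E01 : g (upd z0 t l) = g (upd z1 t l).
  by case: (P _ _ H0 H1).
have lj : l != j by rewrite eq_sym.
apply: Hnl; exists (g (upd z0 t l)) => z /eqP Hz; apply: NNPP => Hz2.
have Hz' : g (upd z t j) <> g (upd z t l) by move=> E; apply: Hz; rewrite E.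
have Ha : g (upd z t j) = g (upd z0 t j).
  case: (P _ _ Hz' H0) => // E; by case: Hz2.
have Hb : g (upd z t j) = g (upd z1 t j).
  case: (P _ _ Hz' H1) => // E; by case: Hz2; rewrite E01.
by apply: H01; rewrite -Ha -Hb.
Qed.


Lemma exists_proper t (j : X t) : exists p, proper_outcome g t j p.
Proof.
have := Hns t j; rewrite /sink => Hs.
have [m Hm] : exists m : X t, ~ (m != j -> exists c, arrow g t m j c).
  by apply: NNPP => H; apply: Hs => m; apply: NNPP => Hm; apply: H; exists m.
have mj : m != j by apply: NNPP => H; apply: Hm => /H.
have Hn : ~ (exists c, arrow g t m j c) by move=> H; apply: Hm.
have jm : j != m by rewrite eq_sym.
case: (@dich t j m jm) => [[c Hc]|//].
by exists c, m; split => //; split.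
Qed.

Lemma lemA t (j l m : X t) b p : m != j -> arrow g t j l b -> darrow g t j m p ->
  b <> p -> arrow g t l j p.
Proof.
move=> mj Hjl [Hjm Hnm] bp z /eqP Hz.
have Hz' : g (upd z t j) != g (upd z t l) by apply/eqP => E; apply: Hz; rewrite E.
have fjz := Hjl z Hz'.
have [y1 [y2 [H1 [H2 H12]]]] := @not_arrow_two t m j mj Hnm.
have Fj : forall y, g (upd y t m) <> g (upd y t j) -> g (upd y t j) = p.
  by move=> y H; apply: Hjm; apply/eqP => E; apply: H; rewrite E.
have Fm : g (upd z t m) = b.
  case: (eqVneq (g (upd z t j)) (g (upd z t m))) => [E|N]; first by rewrite -E.
  by move: (Hjm z N); rewrite fjz => /bp.
have Fl : forall y, g (upd y t m) <> g (upd y t j) -> g (upd y t l) = p.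
  move=> y H; case: (eqVneq (g (upd y t j)) (g (upd y t l))) => [E|N].
    by rewrite -E Fj.
  by move: (Hjl y N); rewrite (Fj _ H) => E; case: bp.
have ml : l != m.
  by apply/eqP => E; apply: (H1); rewrite (Fj _ H1) -(Fl _ H1) E.
have C : forall y, g (upd y t m) <> g (upd y t j) ->
    g (upd z t l) = p \/ g (upd y t m) = b.
  move=> y H; case: (@wtt_col t l m z y ml) => [E|[E|[E|E]]].
  - by left; rewrite E Fl.
  - by case: Hz; rewrite E Fm fjz.
  - by right; rewrite E Fm.
  - by case: (H); rewrite E (Fl _ H) (Fj _ H).
case: (C _ H1) => // E1; case: (C _ H2) => // E2.
by case: H12; rewrite E1 E2.
Qed.

Lemma key t (j l : X t) (Y Z : profile n X) a b e :
  g (upd Y t j) = b -> g (upd Y t l) <> b -> g (upd Z t l) = a -> g (upd Z t j) <> a ->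
  ~ proper_outcome g t j b -> ~ proper_outcome g t l a -> arrow g t j l e -> False.
Proof.
move=> HY1 HY2 HZ1 HZ2 Hpj Hpl Hjl.
have eb : e = b.
  rewrite -HY1; symmetry; apply: Hjl; apply/eqP; rewrite HY1 => E; apply: HY2; by rewrite E.
rewrite eb in Hjl.
have [p [m [mj [Hjm Hnm]]]] := @exists_proper t j.
have bp : b <> p by move=> E; apply: Hpj; exists m; rewrite E.
have Hlj := @lemA t j l m b p mj Hjl (conj Hjm Hnm) bp.
have ap : a = p.
  rewrite -HZ1; apply: Hlj; apply/eqP; rewrite HZ1 => E; apply: HZ2; by rewrite E.
have ml : m != l by apply/eqP => E; apply: Hnm; exists p; rewrite E.
have [y1 [y2 [H1 [H2 H12]]]] := @not_arrow_two t m j mj Hnm.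
have Fj : forall y, g (upd y t m) <> g (upd y t j) -> g (upd y t j) = p.
  by move=> y H; apply: Hjm; apply/eqP => E; apply: H; rewrite E.
have Fl : forall y, g (upd y t m) <> g (upd y t j) -> g (upd y t l) = p.
  move=> y H; case: (eqVneq (g (upd y t j)) (g (upd y t l))) => [E|N].
    by rewrite -E Fj.
  by move: (Hjl y N); rewrite (Fj _ H) => E; case: bp.
have Nml : ~ (exists d, arrow g t m l d).
  move=> [d Hd].
  have D : forall y, g (upd y t m) <> g (upd y t j) -> g (upd y t m) = d.
    move=> y H; apply: Hd; apply/eqP; rewrite Fl // -(Fj _ H) => E; exact: H.
  by apply: H12; rewrite (D _ H1) (D _ H2).
have lm : l != m by rewrite eq_sym.
case: (@dich t l m lm) => [[c Hc]|//].
have cp : c = p.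
  rewrite -(Fl _ H1); symmetry; apply: Hc; rewrite (Fl _ H1); apply/eqP => E; apply: (H1).
  by rewrite -E (Fj _ H1).
apply: Hpl; exists m; split => //; split => //.
by rewrite ap -cp.
Qed.

Lemma diff_upd (x y : profile n X) t i :
  (x i != upd y t (x t) i) = (i != t) && (x i != y i).
Proof.
case: (eqVneq t i) => [<-|ti]; first by rewrite upd_in eqxx.
by rewrite upd_out // eq_sym ti.
Qed.

Lemma diff_upd2 (x y : profile n X) t i :
  (upd x t (y t) i != y i) = (i != t) && (x i != y i).
Proof.
case: (eqVneq t i) => [<-|ti]; first by rewrite upd_in eqxx.
by rewrite upd_out // eq_sym ti.
Qed.

Lemma nobox m : forall x y : profile n X, #|[set i | x i != y i]| = m -> g x != g y ->
  (forall i, x i != y i -> ~ proper_outcome g i (x i) (g x) /\ ~ proper_outcome g i (y i) (g y)) ->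
  False.
Proof.
elim/ltn_ind: m => m IH x y Hcard Hg Hb.
have [t xt] : exists t, x t != y t.
  apply: NNPP => H; move/eqP: Hg; apply; congr g; apply/ffunP => i.
  by apply/eqP; apply: NNPP => H'; apply: H; exists i; apply/negP.
set v := upd y t (x t); set w := upd x t (y t).
have Hsub : forall S : {set 'I_n}, (forall i, i \in S -> (i != t) && (x i != y i)) ->
    #|S| < m.
  move=> S HS; rewrite -Hcard; apply: proper_card; apply/properP; split.
    by apply/subsetP => i /HS /andP [_ H]; rewrite inE.
  by exists t; [rewrite inE | apply/negP => /HS; rewrite eqxx].
have C1 : g v <> g y.
  move=> E; apply: (IH _ (Hsub [set i | x i != v i] _) x v erefl).
  - by move=> i; rewrite inE diff_upd.
  - by rewrite E.
  - move=> i; rewrite diff_upd => /andP [it xy]; have [H1 H2] := Hb i xy.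
    by rewrite E /v upd_out 1?eq_sym.
have C2 : g w <> g x.
  move=> E; apply: (IH _ (Hsub [set i | w i != y i] _) w y erefl).
  - by move=> i; rewrite inE diff_upd2.
  - by rewrite E.
  - move=> i; rewrite diff_upd2 => /andP [it xy]; have [H1 H2] := Hb i xy.
    by rewrite E /w upd_out 1?eq_sym.
have [Hx Hy] := Hb t xt.
have yx : y t != x t by rewrite eq_sym.
case: (@dich t (y t) (x t) yx) => [[e He]|[e He]].
- apply: (@key t (y t) (x t) y x (g x) (g y) e) => //.
  + by rewrite upd_self.
  + by rewrite upd_self.
- apply: (@key t (x t) (y t) x y (g y) (g x) e) => //.
  + by rewrite upd_self.
  + by rewrite upd_self.
Qed.
End H.

Theorem mainTheorem8 (n : nat) (X : 'I_n -> finType) (A : finType)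
  (g : profile n X -> A)
  (HX : forall i : 'I_n, 0 < #|X i|) (HA : 0 < #|A|)
  (Hwtt : WTT g) (Hns : no_sink g)
  (Hnc : no_constant_hyperplane g) (Hdiff : distinct_hyperplanes_differ g)
  (k : nat) (Hk1 : 1 <= k) (Hkn : k <= n) :
  ~ contains_box g k.
Proof.
move=> [x [y [Hg [Hc Hb]]]].
exact: (@nobox n X A g Hwtt Hns Hdiff k x y Hc Hg Hb).
Qed.
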